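(* Let $U$ and $V$ be finite-dimensional vector spaces over a field $\mathbb{K}$, and $\mathcal{S}$ a linear subspace of $\mathcal{L}(U,V)$ with $\operatorname{codim}_{\mathcal{L}(U,V)}\mathcal{S}\leq 2\dim V-3$. Assume that there is a nonzero $x\in U$ with $\dim\mathcal{S}x\leq 1$, and let $F:\mathcal{S}\to V$ be a range-compatible group homomorphism. Then: (a) if $\mathcal{S}x=\{0\}$, $F$ is local; (b) if $\mathcal{S}x\neq\{0\}$, $F$ is the sum of a local map and of the map $s\mapsto\alpha(s(x))$ for some endomorphism $\alpha$ of the additive group $\mathcal{S}x$; (c) if $F$ is linear, then $F$ is local.
   Context: $\mathcal{S}x:=\{s(x):s\in\mathcal{S}\}$. A map $F:\mathcal{S}\to V$ is range-compatible when $F(s)\in\operatorname{im}s$ for all $s\in\mathcal{S}$, and local when there exists $y\in U$ with $F(s)=s(y)$ for all $s\in\mathcal{S}$. *)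

(* Defs.v *)
From HB Require Import structures.
From mathcomp Require Import all_boot all_order all_algebra.
Set Implicit Arguments. Unset Strict Implicit. Unset Printing Implicit Defensive.
Import GRing.Theory.
Local Open Scope ring_scope.

Definition eval_at (K : fieldType) (U V : vectType K) (x : U) : 'Hom('Hom(U, V), V) :=
  linfun (fun f : 'Hom(U, V) => f x).

Definition Sx (K : fieldType) (U V : vectType K) (S : {vspace 'Hom(U, V)}) (x : U)
  : {vspace V} := (eval_at V x @: S)%VS.

(* F : S -> V (represented on all of L(U,V), only values on S matter) *)
Definition additive_on (K : fieldType) (U V : vectType K) (S : {vspace 'Hom(U, V)})
  (F : 'Hom(U, V) -> V) : Prop :=
  forall s t, s \in S -> t \in S -> F (s + t) = F s + F t.

Definition linear_on (K : fieldType) (U V : vectType K) (S : {vspace 'Hom(U, V)})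
  (F : 'Hom(U, V) -> V) : Prop :=
  additive_on S F /\ forall (a : K) s, s \in S -> F (a *: s) = a *: F s.

Definition range_compatible (K : fieldType) (U V : vectType K) (S : {vspace 'Hom(U, V)})
  (F : 'Hom(U, V) -> V) : Prop :=
  forall s, s \in S -> F s \in limg s.

Definition local_map (K : fieldType) (U V : vectType K) (S : {vspace 'Hom(U, V)})
  (F : 'Hom(U, V) -> V) : Prop :=
  exists y : U, forall s, s \in S -> F s = s y.

Definition additive_endo_of (K : fieldType) (V : vectType K) (W : {vspace V})
  (alpha : V -> V) : Prop :=
  (forall v, v \in W -> alpha v \in W) /\
  (forall v w, v \in W -> w \in W -> alpha (v + w) = alpha v + alpha w).

(* Main.v *)
Require Import Defs.
From HB Require Import structures.
From mathcomp Require Import all_boot all_order all_algebra.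
From mathcomp Require Import zify.
Import GRing.Theory.
Local Open Scope ring_scope.
Set Implicit Arguments.
Unset Strict Implicit.

Ltac nlia := cbv [reverse_coercion] in *; nia.

Section Aux.
Variables (K : fieldType) (U V : vectType K).

Definition appf (x : U) (f : 'Hom(U,V)) : V := f x.
Fact appf_lin x : linear (appf x).
Proof. by move=> a f g; rewrite /appf add_lfunE scale_lfunE. Qed.
HB.instance Definition _ x := GRing.isLinear.Build K 'Hom(U,V) V _ (appf x) (appf_lin x).
Lemma evalE (x : U) (f : 'Hom(U,V)) : eval_at V x f = f x.
Proof. by rewrite -[f x]/(appf x f) -(lfunE (appf x)). Qed.
Definition cmpf (P : 'End(V)) (d : 'Hom(U,V)) : 'Hom(U,V) := (P \o d)%VF.
Fact cmpf_lin P : linear (cmpf P).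
Proof. by move=> a f g; rewrite /cmpf comp_lfunDr comp_lfunZr. Qed.
HB.instance Definition _ P := GRing.isLinear.Build K 'Hom(U,V) 'Hom(U,V) _ (cmpf P) (cmpf_lin P).
Definition compP P := linfun (cmpf P).
Lemma compPE P d : compP P d = (P \o d)%VF.
Proof. by rewrite /compP lfunE. Qed.

Notation dU := (\dim (fullv : {vspace U})).

Definition inH (Z : {vspace U}) (C : {vspace V}) (s : 'Hom(U,V)) : Prop :=
  (forall z, z \in Z -> s z = 0) /\ (forall u, s u \in C).

Lemma exists_notin (Z : {vspace U}) : (\dim Z < dU)%N -> exists w, w \notin Z.
Proof.
move=> H; have : ~~ (fullv <= Z)%VS.
  by apply/negP => /dimvS; rewrite leqNgt H.
by case/subvPn => w _ Hw; exists w.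
Qed.

Lemma full_of_dim (Z : {vspace U}) : (dU <= \dim Z)%N -> Z = fullv.
Proof. by move=> H; apply/eqP; rewrite eqEdim subvf. Qed.

Lemma dim_addline (Z : {vspace U}) w : w \notin Z -> \dim (Z + <[w]>)%VS = (\dim Z).+1.
Proof.
move=> Hw; have w0 : w != 0 by apply: contraNneq Hw => ->; apply: mem0v.
rewrite dimv_disjoint_sum ?dim_vline ?w0 ?addn1 //.
apply/eqP; rewrite -subv0; apply/subvP => y /memv_capP [Hy /vlineP [k Hk]].
rewrite memv0; apply/eqP; move: Hy; rewrite Hk.
have [-> | k0] := eqVneq k 0; first by rewrite scale0r.
move=> Hy; case/negP: Hw; have -> : w = k^-1 *: (k *: w) by rewrite scalerA mulVf // scale1r.
exact: memvZ.
Qed.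

Lemma inH_full C s : inH fullv C s -> s = 0.
Proof. by case=> H _; apply/lfunP => u; rewrite H ?memvf // lfunE. Qed.

Lemma inH_line (Z : {vspace U}) C s w : inH Z C s -> s w = 0 -> inH (Z + <[w]>)%VS C s.
Proof.
case=> H1 H2 Hw; split=> // y /memv_addP [y1 Hy1 [y2 /vlineP [k ->] ->]].
by rewrite linearD linearZ /= H1 // Hw scaler0 addr0.
Qed.

Lemma cap_ker (D : {vspace 'Hom(U,V)}) w d :
  d \in (D :&: lker (eval_at V w))%VS -> d \in D /\ d w = 0.
Proof. by rewrite memv_cap memv_ker evalE => /andP [-> /eqP]. Qed.

Lemma dimB k : forall (Z : {vspace U}) (C : {vspace V}) (S : {vspace 'Hom(U,V)}),
  (dU - \dim Z = k)%N -> (forall s, s \in S -> inH Z C s) ->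
  (\dim S <= (dU - \dim Z) * \dim C)%N.
Proof.
elim: k => [|k IH] Z C S Hk HS.
  have HZ : Z = fullv by apply: full_of_dim; lia.
  rewrite Hk mul0n leqn0 dimv_eq0 -subv0; apply/subvP => s Hs.
  by have := HS s Hs; rewrite HZ => /inH_full ->; rewrite memv0.
have [w Hw] : exists w, w \notin Z by apply: exists_notin; lia.
have Hk' : (dU - \dim (Z + <[w]>)%VS = k)%N by rewrite dim_addline //; lia.
have := limg_ker_dim (eval_at V w) S.
have H1 := IH _ C (S :&: lker (eval_at V w))%VS Hk'.
have H2 : (\dim (eval_at V w @: S)%VS <= \dim C)%N.
  apply: dimvS; apply/subvP => e /memv_imgP [s Hs ->]; rewrite evalE.
  by case: (HS s Hs).
have : (\dim (S :&: lker (eval_at V w))%VS <= k * \dim C)%N.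
  rewrite -Hk'; apply: H1 => s /cap_ker [Hs Hw0]; exact: inH_line (HS s Hs) Hw0.
rewrite Hk mulSn => A B; clear -A B H2; cbv [reverse_coercion] in *; lia.
Qed.


Definition CLprop (Z : {vspace U}) := forall (C : {vspace V}) (D : {vspace 'Hom(U,V)}) (a0 : 'Hom(U,V)) z,
  (forall d, d \in D -> inH Z C d) -> inH Z C a0 -> z \in C -> z != 0 ->
  ((dU - \dim Z) * \dim C + 1 <= \dim D + \dim C)%N ->
  exists d, d \in D /\ z \notin limg (a0 + d).

Lemma limg_mem (f : 'Hom(U,V)) u : f u \in limg f.
Proof. by apply: memv_img; apply: memvf. Qed.

Lemma ILp (Z : {vspace U}) : CLprop Z ->
  forall (C : {vspace V}) (D : {vspace 'Hom(U,V)}) (t : 'Hom(U,V)) v f,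
  (forall d, d \in D -> inH Z C d) -> (forall u, t u \in C) -> v \in C -> v != 0 ->
  (forall z, z \in Z -> t z \in <[v]>%VS) -> f \in C -> f \notin <[v]>%VS ->
  ((dU - \dim Z) * \dim C + 2 <= \dim D + \dim C)%N ->
  exists d, d \in D /\ f \notin limg (t + d).
Proof.
move=> HCL C D t v f HD Ht Hv Hv0 HtZ Hf Hfv Hdim.
pose P := addv_pi1 C <[v]>.
pose C' := (C :\: <[v]>)%VS.
have P1 : forall y, P y \in C' by move=> y; apply: memv_pi.
have P2 : forall y, y \in <[v]>%VS -> P y = 0.
  move=> y Hy; have := @addv_pi1_pi2 _ _ C <[v]>%VS y (subvP (addvSr _ _) _ Hy).
  by rewrite addv_pi2_id // => /(congr1 (fun a => a - y)); rewrite addrK subrr.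
have P3 : forall y, y \in C -> P y = 0 -> y \in <[v]>%VS.
  move=> y Hy Py; have := @addv_pi1_pi2 _ _ C <[v]>%VS y (subvP (addvSl _ _) _ Hy).
  rewrite -/P Py add0r => <-; exact: memv_pi2.
have P4 : \dim C' = (\dim C).-1.
  have := dimv_cap_compl C <[v]>%VS.
  have -> : (C :&: <[v]>)%VS = <[v]>%VS by apply/capv_idPr; rewrite -memvE.
  by rewrite dim_vline Hv0 /C' => <-.
have Hc1 : (1 <= \dim C)%N.
  by move: (@dimvS _ _ <[v]>%VS C); rewrite dim_vline Hv0 -memvE => /(_ Hv).
pose Phi := compP P.
pose D' := (Phi @: D)%VS.
have P5 : (\dim D <= \dim D' + (dU - \dim Z))%N.
  have := limg_ker_dim Phi D.
  have : (\dim (D :&: lker Phi)%VS <= (dU - \dim Z) * \dim <[v]>%VS)%N.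
    apply: (@dimB _ Z <[v]>%VS _ erefl) => d; rewrite memv_cap memv_ker => /andP [Hd /eqP Hd0].
    have [HdZ HdC] := HD d Hd; split => // u; apply: P3 => //.
    by rewrite -[P (d u)]comp_lfunE -compPE -/Phi Hd0 lfunE.
  rewrite dim_vline Hv0 muln1 /D'; clear; nlia.
have HD' : forall d', d' \in D' -> inH Z C' d'.
  move=> _ /memv_imgP [d Hd ->]; have [HdZ _] := HD d Hd; split.
    by move=> z Hz; rewrite compPE comp_lfunE HdZ // linear0.
  by move=> u; rewrite compPE comp_lfunE.
have Ha0 : inH Z C' (P \o t)%VF.
  split; last by move=> u; rewrite comp_lfunE.
  by move=> z Hz; rewrite comp_lfunE P2 // HtZ.
have HPf : P f \in C' by [].
have HPf0 : P f != 0 by apply: contra Hfv => /eqP; apply: P3.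
have [d' [Hd' Hn]] := HCL C' D' (P \o t)%VF (P f) HD' Ha0 HPf HPf0
  ltac:(rewrite P4; clear -Hdim P5 Hc1; nlia).
case/memv_imgP: Hd' => d Hd Ed'; exists d; split => //.
apply: contra Hn => /memv_imgP [u0 _ Hu0].
rewrite Hu0 Ed' compPE.
have -> : P ((t + d) u0) = ((P \o t)%VF + (P \o d)%VF) u0.
  by rewrite !add_lfunE !comp_lfunE linearD.
exact: limg_mem.
Qed.

Lemma line_sub {y z : V} : y \in <[z]>%VS -> (<[y]> <= <[z]>)%VS.
Proof. by rewrite -memvE. Qed.

Lemma CL k : forall Z : {vspace U}, (dU - \dim Z = k)%N -> CLprop Z.
Proof.
elim: k => [|k IH] Z Hk C D a0 z HD Ha0 Hz Hz0 Hdim.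
  have HZ : Z = fullv by apply: full_of_dim; lia.
  rewrite HZ in Ha0; have -> := inH_full Ha0.
  exists 0; split; first exact: mem0v.
  apply: contra Hz0 => /memv_imgP [u _ ->]; by rewrite addr0 lfunE.
have [w Hw] : exists w, w \notin Z by apply: exists_notin; lia.
have Hk' : (dU - \dim (Z + <[w]>)%VS = k)%N by rewrite dim_addline //; lia.
have IHZ := IH _ Hk'.
pose Ev := eval_at V w.
pose E := (Ev @: D)%VS.
pose D1 := (D :&: lker Ev)%VS.
have HE : forall e, e \in E -> exists2 d, d \in D & e = d w.
  by move=> e /memv_imgP [d Hd ->]; exists d; rewrite // evalE.
have HEC : (E <= C)%VS.
  by apply/subvP => e /HE [d Hd ->]; case: (HD d Hd).
have HdE : (\dim E <= \dim C)%N by apply: dimvS.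
have Hsum : (\dim D1 + \dim E = \dim D)%N by apply: limg_ker_dim.
have HD1 : forall d, d \in D1 -> inH (Z + <[w]>)%VS C d.
  by move=> d /cap_ker [Hd Hw0]; apply: inH_line (HD d Hd) Hw0.
have HD1D : forall d, d \in D1 -> d \in D by move=> d /cap_ker [].
have HB1 : (\dim D1 <= k * \dim C)%N.
  by rewrite -Hk'; apply: (@dimB _ _ C _ erefl).
rewrite Hk in Hdim.
have [Ha0w | Ha0w] := boolP (a0 w \in E).
  have [d' Hd' Ed'] := HE _ Ha0w.
  have Ha1 : inH (Z + <[w]>)%VS C (a0 - d').
    apply: inH_line; last by rewrite add_lfunE opp_lfunE Ed' subrr.
    have [HaZ HaC] := Ha0; have [HdZ HdC] := HD d' Hd'.
    split; first by move=> y Hy; rewrite add_lfunE opp_lfunE HaZ // HdZ // subrr.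
    by move=> u; rewrite add_lfunE opp_lfunE memvB.
  have [d1 [Hd1 Hn]] := IHZ C D1 (a0 - d') z HD1 Ha1 Hz Hz0
    ltac:(rewrite Hk'; clear -Hdim Hsum HdE; nlia).
  exists (d1 - d'); split; first by apply: memvB => //; apply: HD1D.
  by have -> : a0 + (d1 - d') = a0 - d' + d1 by rewrite addrCA addrC.
have HEC' : (\dim E < \dim C)%N.
  rewrite ltnNge; apply: contra Ha0w => H.
  have /eqP -> : E == C by rewrite eqEdim HEC H.
  by case: Ha0.
have HE1 : (1 <= \dim E)%N by clear -Hdim Hsum HB1; nlia.
have [e [He Hee]] : exists e, e \in E /\ a0 w + e \notin <[z]>%VS.
  have [Hz1 | Hz1] := boolP (a0 w \in <[z]>%VS); last first.
    by exists 0; rewrite addr0 mem0v.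
  have : ~~ (E <= <[z]>)%VS.
    apply: contra Ha0w => H.
    have /eqP -> : E == <[z]>%VS by rewrite eqEdim H dim_vline Hz0.
    exact: Hz1.
  case/subvPn => e He Hez; exists e; split => //.
  apply: contra Hez => H; have -> : e = (a0 w + e) - a0 w by rewrite addrC addKr.
  exact: memvB.
have [d' Hd' Ed'] := HE _ He.
pose cc := a0 w + e.
have Hcc0 : cc != 0.
  by apply/eqP => H0; move: Hee; rewrite -/cc H0 mem0v.
have Hzcc : z \notin <[cc]>%VS.
  apply: contra Hee => /vlineP [c Hc].
  have c0 : c != 0 by apply: contraNneq Hz0 => c0; rewrite Hc c0 scale0r.
  apply/vlineP; exists c^-1; by rewrite Hc scalerA mulVf // scale1r.
have HccC : cc \in C.
  by apply: memvD; [case: Ha0 | apply: (subvP HEC)].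
have Ha1C : forall u, (a0 + d') u \in C.
  by move=> u; rewrite add_lfunE; apply: memvD; [case: Ha0 | case: (HD d' Hd')].
have Ha1Z : forall y, y \in (Z + <[w]>)%VS -> (a0 + d') y \in <[cc]>%VS.
  move=> _ /memv_addP [y1 Hy1 [_ /vlineP [c ->] ->]].
  rewrite linearD linearZ /=.
  have [HaZ _] := Ha0; have [HdZ _] := HD d' Hd'.
  rewrite !add_lfunE HaZ // HdZ // !add0r -Ed'.
  by apply: memvZ; apply: memv_line.
have [d1 [Hd1 Hn]] := @ILp _ IHZ C D1 (a0 + d') cc z HD1 Ha1C HccC Hcc0 Ha1Z Hz Hzcc
  ltac:(rewrite Hk'; clear -Hdim Hsum HB1 HEC'; nlia).
exists (d' + d1); split; first by apply: memvD => //; apply: HD1D.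
by rewrite addrA.
Qed.

Lemma TT k : forall (Z : {vspace U}) (C : {vspace V}) (S : {vspace 'Hom(U,V)})
  (F : 'Hom(U,V) -> V),
  (dU - \dim Z = k)%N -> (forall s, s \in S -> inH Z C s) ->
  ((dU - \dim Z) * \dim C + 2 <= \dim S + \dim C)%N ->
  additive_on S F -> range_compatible S F -> local_map S F.
Proof.
elim: k => [|k IH] Z C S F Hk HS Hdim HF HR.
  have HZ : Z = fullv by apply: full_of_dim; lia.
  exists 0 => s Hs.
  have -> : s = 0 by have := HS s Hs; rewrite HZ => /inH_full.
  have h := HF 0 0 (mem0v _) (mem0v _); rewrite addr0 in h.
  have : F 0 + F 0 - F 0 = F 0 - F 0 by rewrite -h.
  by rewrite addrK subrr linear0 => ->.
have [w Hw] : exists w, w \notin Z by apply: exists_notin; lia.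
have Hk' : (dU - \dim (Z + <[w]>)%VS = k)%N by rewrite dim_addline //; lia.
pose Ev := eval_at V w.
pose E := (Ev @: S)%VS.
pose S1 := (S :&: lker Ev)%VS.
have HE : forall e, e \in E -> exists2 d, d \in S & e = d w.
  by move=> e /memv_imgP [d Hd ->]; exists d; rewrite // evalE.
have HEC : (E <= C)%VS.
  by apply/subvP => e /HE [d Hd ->]; case: (HS d Hd).
have HdE : (\dim E <= \dim C)%N by apply: dimvS.
have Hsum : (\dim S1 + \dim E = \dim S)%N by apply: limg_ker_dim.
have HS1 : forall d, d \in S1 -> inH (Z + <[w]>)%VS C d.
  by move=> d /cap_ker [Hd Hw0]; apply: inH_line (HS d Hd) Hw0.
have HS1S : forall d, d \in S1 -> d \in S by move=> d /cap_ker [].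
have HB1 : (\dim S1 <= k * \dim C)%N.
  by rewrite -Hk'; apply: (@dimB _ _ C _ erefl).
rewrite Hk in Hdim.
have [y1 Hy1] : local_map S1 F.
  apply: (IH _ C S1 F Hk' HS1).
  - by rewrite Hk'; clear -Hdim Hsum HdE; nlia.
  - by move=> s t Hs Ht; apply: HF; apply: HS1S.
  - by move=> s Hs; apply: HR; apply: HS1S.
pose F1 := fun s : 'Hom(U,V) => F s - s y1.
have HF1 : forall s t, s \in S -> t \in S -> F1 (s + t) = F1 s + F1 t.
  by move=> s t Hs Ht; rewrite /F1 HF // add_lfunE opprD addrACA.
have HF10 : forall s, s \in S1 -> F1 s = 0 by move=> s Hs; rewrite /F1 Hy1 // subrr.
have HR1 : forall s, s \in S -> F1 s \in limg s.
  by move=> s Hs; apply: memvB; [apply: HR | apply: limg_mem].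
have Kc : forall s, s \in S -> F1 s \in <[s w]>%VS.
  move=> s Hs; have [sw0|sw0] := eqVneq (s w) 0.
    by rewrite HF10 ?mem0v // /S1 memv_cap Hs memv_ker evalE sw0 eqxx.
  apply/negPn/negP => Hn.
  have [HsZ HsC] := HS s Hs.
  have HsZ' : forall y, y \in (Z + <[w]>)%VS -> s y \in <[s w]>%VS.
    move=> _ /memv_addP [y1' Hy1' [_ /vlineP [c ->] ->]].
    rewrite linearD linearZ /= HsZ // add0r.
    by apply: memvZ; apply: memv_line.
  have HF1C : F1 s \in C by case/memv_imgP: (HR1 s Hs) => u _ ->.
  have [d [Hd Hn']] := @ILp _ (@CL k _ Hk') C S1 s (s w) (F1 s) HS1 HsC (HsC w) sw0 HsZ'
    HF1C Hn ltac:(rewrite Hk'; clear -Hdim Hsum HdE; nlia).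
  apply: (negP Hn'); have := HR1 _ (memvD Hs (HS1S d Hd)).
  rewrite HF1 //; last by apply: HS1S.
  by rewrite (HF10 d Hd) addr0.
have HE2 : (2 <= \dim E)%N by clear -Hdim Hsum HB1; nlia.
have [r0 [Hr0 Hr0w]] : exists r0, r0 \in S /\ r0 w != 0.
  have [r0 Hr0 Er0] := HE _ (memv_pick E); exists r0; split => //.
  by rewrite -Er0 vpick0 -dimv_eq0 -lt0n; clear -HE2; lia.
have [t [Ht Htw]] : exists t, t \in S /\ t w \notin <[r0 w]>%VS.
  have : ~~ (E <= <[r0 w]>)%VS.
    by apply/negP => /dimvS; rewrite dim_vline Hr0w; clear -HE2; lia.
  by case/subvPn => e He Hen; have [t Ht Et] := HE _ He; exists t; rewrite -Et.
have Hind : forall s t ks kt, s \in S -> t \in S -> s w != 0 -> t w \notin <[s w]>%VS ->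
    F1 s = ks *: s w -> F1 t = kt *: t w -> ks = kt.
  move=> s t' ks kt Hs Ht' Hs0 Hts Es Et.
  have /vlineP [kk Ekk] := Kc _ (memvD Hs Ht').
  rewrite HF1 // Es Et add_lfunE scalerDr in Ekk.
  have Hkt : kk = kt.
    have [//|Hne] := eqVneq kk kt; exfalso; apply: (negP Hts).
    have E1 : (kk - kt) *: t' w = (ks - kk) *: s w.
      apply/eqP; rewrite !scalerBl subr_eq addrAC Ekk addrC addKr //.
    have -> : t' w = ((kk - kt)^-1 * (ks - kk)) *: s w.
      by rewrite -scalerA -E1 scalerA mulVf ?scale1r // subr_eq0.
    by apply: memvZ; apply: memv_line.
  rewrite Hkt in Ekk; move/addIr: Ekk => /eqP.
  rewrite -subr_eq0 -scalerBl scaler_eq0 (negbTE Hs0) orbF subr_eq0.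
  by move/eqP.
have /vlineP [k0 Ek0] := Kc r0 Hr0.
have Hall : forall s, s \in S -> F1 s = k0 *: s w.
  move=> s Hs; have /vlineP [ks Eks] := Kc s Hs.
  have [sw0|sw0] := eqVneq (s w) 0.
    by rewrite HF10 ?sw0 ?scaler0 // /S1 memv_cap Hs memv_ker evalE sw0 eqxx.
  have [Hsr | Hsr] := boolP (s w \in <[r0 w]>%VS).
    have Htr : t w \notin <[s w]>%VS.
      by apply: contra Htw => H; have := subv_trans (line_sub H) (line_sub Hsr); rewrite -memvE.
    have /vlineP [kt Ekt] := Kc t Ht.
    have h1 := Hind _ _ _ _ Hr0 Ht Hr0w Htw Ek0 Ekt.
    have h2 := Hind _ _ _ _ Hs Ht sw0 Htr Eks Ekt.
    by rewrite Eks h2 -h1.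
  have h := Hind _ _ _ _ Hr0 Hs Hr0w Hsr Ek0 Eks.
  by rewrite Eks -h.
exists (y1 + k0 *: w) => s Hs.
have := Hall s Hs; rewrite /F1 => H.
by rewrite linearD linearZ /= -H addrC subrK.
Qed.

Lemma coord_line (y0 v : V) : v \in <[y0]>%VS -> v = coord [tuple y0] 0 v *: y0.
Proof.
move=> Hv; have := @coord_span _ _ 1 [tuple y0] v.
rewrite big_ord1 /=; apply; by rewrite span_seq1.
Qed.
End Aux.
Unset Implicit Arguments.

Theorem proposition2p9 (K : fieldType) (U V : vectType K)
  (S : {vspace 'Hom(U, V)}) (x : U) (F : 'Hom(U, V) -> V) :
  ((\dim (fullv : {vspace 'Hom(U, V)}) - \dim S) + 3 <= 2 * \dim (fullv : {vspace V}))%N ->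
  x != 0 ->
  (\dim (Sx S x) <= 1)%N ->
  additive_on S F ->
  range_compatible S F ->
  [/\ (Sx S x = 0%VS -> local_map S F),
      (Sx S x != 0%VS ->
         exists (y : U) (alpha : V -> V),
           additive_endo_of (Sx S x) alpha /\
           forall s, s \in S -> F s = s y + alpha (s x))
    & (linear_on S F -> local_map S F)].
Proof.
move=> Hdim Hx0 HSx HF HR.
have Hp : \dim (fullv : {vspace 'Hom(U, V)}) =
   (\dim (fullv : {vspace U}) * \dim (fullv : {vspace V}))%N by rewrite !dimvf.
have HSle : (\dim S <= \dim (fullv : {vspace 'Hom(U, V)}))%N by apply: dimvS; apply: subvf.
pose Ev := eval_at V x.
pose S1 := (S :&: lker Ev)%VS.
have Hsum : (\dim S1 + \dim (Sx S x) = \dim S)%N by apply: limg_ker_dim.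
have Hx1 : \dim <[x]>%VS = 1%N by rewrite dim_vline Hx0.
have Hp1 : (1 <= \dim (fullv : {vspace U}))%N by rewrite -Hx1; apply: dimvS; apply: subvf.
have HS1 : forall d, d \in S1 -> inH <[x]>%VS fullv d.
  move=> d /cap_ker [Hd Hdx]; split; last by move=> u; apply: memvf.
  by move=> _ /vlineP [c ->]; rewrite linearZ /= Hdx scaler0.
have HS1S : forall d, d \in S1 -> d \in S by move=> d /cap_ker [].
have Hdim1 : ((\dim (fullv : {vspace U}) - \dim <[x]>%VS) * \dim (fullv : {vspace V}) + 2
   <= \dim S1 + \dim (fullv : {vspace V}))%N.
  rewrite Hx1; rewrite Hp in Hdim HSle; clear -Hdim HSle Hsum HSx Hp1; nlia.
have [y Hy] : local_map S1 F.
  apply: (@TT K U V _ <[x]>%VS fullv S1 F erefl HS1 Hdim1).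
  - by move=> s t Hs Ht; apply: HF; apply: HS1S.
  - by move=> s Hs; apply: HR; apply: HS1S.
pose F1 := fun s : 'Hom(U,V) => F s - s y.
have HF1 : forall s t, s \in S -> t \in S -> F1 (s + t) = F1 s + F1 t.
  by move=> s t Hs Ht; rewrite /F1 HF // add_lfunE opprD addrACA.
have HF10 : forall s, s \in S1 -> F1 s = 0 by move=> s Hs; rewrite /F1 Hy // subrr.
have HR1 : forall s, s \in S -> F1 s \in limg s.
  by move=> s Hs; apply: memvB; [apply: HR | apply: limg_mem].
have Kc : forall s, s \in S -> F1 s \in <[s x]>%VS.
  move=> s Hs; have [sx0|sx0] := eqVneq (s x) 0.
    by rewrite HF10 ?mem0v // /S1 memv_cap Hs memv_ker evalE sx0 eqxx.
  apply/negPn/negP => Hn.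
  have HsZ' : forall z, z \in <[x]>%VS -> s z \in <[s x]>%VS.
    by move=> _ /vlineP [c ->]; rewrite linearZ /=; apply: memvZ; apply: memv_line.
  have [d [Hd Hn']] := @ILp K U V _ (@CL K U V _ _ erefl) fullv S1 s (s x) (F1 s) HS1
    (fun u => memvf _) (memvf _) sx0 HsZ' (memvf _) Hn Hdim1.
  apply: (negP Hn'); have := HR1 _ (memvD Hs (HS1S d Hd)).
  rewrite HF1 //; last by apply: HS1S.
  by rewrite (HF10 d Hd) addr0.
have HinS1 : forall s, s \in S -> s x = 0 -> s \in S1.
  by move=> s Hs sx0; rewrite /S1 memv_cap Hs memv_ker evalE sx0 eqxx.
have HFy : forall s, F s = s y + F1 s by move=> s; rewrite /F1 addrC subrK.
have [HSx0 | HSx0] := eqVneq (Sx S x) 0%VS.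
  have Hloc : local_map S F.
    exists y => s Hs; apply: Hy; apply: HinS1 => //.
    have : Ev s \in Sx S x by apply: memv_img.
    by rewrite HSx0 memv0 evalE => /eqP.
  by split => // /negP.
have [s0 Hs0 Es0] : exists2 s0, s0 \in S & vpick (Sx S x) = s0 x.
  by case/memv_imgP: (memv_pick (Sx S x)) => s0 Hs0 ->; exists s0; rewrite ?evalE.
pose y0 := s0 x.
have Hy00 : y0 != 0 by rewrite /y0 -Es0 vpick0.
have HSxl : Sx S x = <[y0]>%VS.
  apply/eqP; rewrite eq_sym eqEdim dim_vline Hy00 HSx andbT -memvE /y0 -Es0.
  exact: memv_pick.
have Hsx : forall s, s \in S -> s x \in <[y0]>%VS.
  by move=> s Hs; rewrite -HSxl -(evalE x s); apply: memv_img.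
pose lam := coord [tuple y0] 0.
have Hdec : forall s, s \in S -> F1 s = F1 (lam (s x) *: s0).
  move=> s Hs.
  have H1 : s - lam (s x) *: s0 \in S1.
    apply: HinS1; first by apply: memvB => //; apply: memvZ.
    by rewrite add_lfunE opp_lfunE scale_lfunE -/y0 -(coord_line (Hsx s Hs)) subrr.
  have := HF1 _ _ (memvZ (lam (s x)) Hs0) (HS1S _ H1).
  by rewrite addrC subrK (HF10 _ H1) addr0.
split; first by move=> H; rewrite H eqxx in HSx0.
  move=> _; exists y, (fun v => F1 (lam v *: s0)); split.
    split.
      move=> v Hv; have /vlineP [c Hc] := Kc _ (memvZ (lam v) Hs0).
      rewrite Hc HSxl scale_lfunE -/y0 scalerA; apply: memvZ; apply: memv_line.
    move=> v w Hv Hw /=; rewrite /lam linearD scalerDl HF1 //; by apply: memvZ.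
  by move=> s Hs; rewrite HFy -Hdec.
case=> _ Hlin.
have /vlineP [k0 Ek0] := Kc _ Hs0.
exists (y + k0 *: x) => s Hs.
rewrite HFy Hdec //.
have -> : F1 (lam (s x) *: s0) = lam (s x) *: F1 s0.
  by rewrite /F1 Hlin // scale_lfunE scalerBr.
rewrite Ek0 -/y0 scalerA mulrC -scalerA -(coord_line (Hsx s Hs)).
by rewrite linearD linearZ.
Qed.
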